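(* Let $p>1$ and let $\varphi:\mathbb{R}^n\to\mathbb{R}\cup\{+\infty\}$ be proper and lower semicontinuous. Suppose $\bar x=0$ is a $p$-calm point of $\varphi$ with constant $M>0$ and $\varphi(0)=0$. Then for any $\gamma\in\big(0,\frac{2^{1-p}}{Mp}\big)$ and any $\varepsilon>0$ there is a neighborhood $U$ of $0$ such that $\operatorname{prox}^p_{\gamma\varphi}(x)\neq\emptyset$ for all $x\in U$, and if $y\in\operatorname{prox}^p_{\gamma\varphi}(x)$ with $x\in U$, then $\|y\|<\varepsilon$, $\varphi(y)<\varepsilon$, and $\frac1\gamma\|x-y\|^{p-1}<\varepsilon$.
   Context: $\operatorname{prox}^p_{\gamma\varphi}(x):=\operatorname{argmin}_{y}\big(\varphi(y)+\frac{1}{p\gamma}\|x-y\|^p\big)$. A point $\bar x\in\operatorname{dom}\varphi$ is a $p$-calm point of $\varphi$ with constant $M>0$ if $\varphi(x)+M\|x-\bar x\|^p>\varphi(\bar x)$ for all $x\neq\bar x$. *)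

(* Defs.v *)
From HB Require Import structures.
From mathcomp Require Import all_boot all_order all_algebra.
From mathcomp Require Import all_classical all_reals all_analysis.
Set Implicit Arguments. Unset Strict Implicit. Unset Printing Implicit Defensive.
Import Order.TTheory GRing.Theory Num.Theory.
Import numFieldNormedType.Exports.
Local Open Scope classical_set_scope.
Local Open Scope ring_scope.

Definition enorm (R : realType) (n : nat) (x : 'rV[R]_n) : R :=
  Num.sqrt (\sum_(i < n) x ord0 i ^+ 2).

Definition proper_fun (R : realType) (n : nat) (phi : 'rV[R]_n -> \bar R) :=
  (forall x, (-oo < phi x)%E) /\ exists x, phi x \is a fin_num.

Definition prox (R : realType) (n : nat) (p gamma : R)
  (phi : 'rV[R]_n -> \bar R) (x : 'rV[R]_n) : set 'rV[R]_n :=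
  [set y | forall z, (phi y + ((enorm (x - y) `^ p) / (p * gamma))%:E
                      <= phi z + ((enorm (x - z) `^ p) / (p * gamma))%:E)%E].

Definition p_calm (R : realType) (n : nat) (p M : R)
  (phi : 'rV[R]_n -> \bar R) (xb : 'rV[R]_n) :=
  phi xb \is a fin_num /\
  forall x, x != xb -> (phi xb < phi x + (M * enorm (x - xb) `^ p)%:E)%E.

(* Main.v *)
Require Import Defs.
From HB Require Import structures.
From mathcomp Require Import all_boot all_order all_algebra.
From mathcomp Require Import all_classical all_reals all_analysis.
Import Order.TTheory GRing.Theory Num.Theory.
Import numFieldNormedType.Exports.
Local Open Scope classical_set_scope.
Local Open Scope ring_scope.

From mathcomp Require Import ring lra.
From mathcomp Require finmap.

Section E.
Variables (R : realType) (n : nat).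
Implicit Types a b x y z : 'rV[R]_n.

Definition SS x := \sum_(i < n) x ord0 i ^+ 2.

Lemma SS_ge0 x : 0 <= SS x.
Proof. by apply: sumr_ge0 => i _; rewrite sqr_ge0. Qed.

Lemma quadE a b (s t : R) :
  \sum_(i < n) (s * a ord0 i + t * b ord0 i) ^+ 2 =
  s ^+ 2 * SS a + 2 * s * t * (\sum_(i < n) a ord0 i * b ord0 i) + t ^+ 2 * SS b.
Proof.
rewrite /SS !mulr_sumr -!big_split /=; apply: eq_bigr => i _; ring.
Qed.

Lemma CS a b : (\sum_(i < n) a ord0 i * b ord0 i) ^+ 2 <= SS a * SS b.
Proof.
set B := \sum_(i < n) _.
have H s t : 0 <= s ^+ 2 * SS a + 2 * s * t * B + t ^+ 2 * SS b.
  by rewrite -quadE; apply: sumr_ge0 => i _; rewrite sqr_ge0.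
have [Sa0|Sapos] := eqVneq (SS a) 0.
  have a0 : forall i, a ord0 i = 0.
    move=> i; apply/eqP; rewrite -sqrf_eq0; apply/eqP.
    by apply: (psumr_eq0P _ Sa0) => // j _; rewrite sqr_ge0.
  have -> : B = 0 by rewrite /B big1 // => i _; rewrite a0 mul0r.
  by rewrite Sa0 expr0n /= mul0r.
have Sa_gt0 : 0 < SS a by rewrite lt_def Sapos SS_ge0.
have := H B (- SS a).
have := SS_ge0 b.
move=> Hb Hq.
have : 0 <= SS a * (SS a * SS b - B ^+ 2).
  by rewrite (le_trans Hq) //; rewrite le_eqVlt; apply/orP; left; apply/eqP; ring.
by rewrite pmulr_rge0 // subr_ge0.
Qed.

Lemma enorm_ge0 x : 0 <= enorm x.
Proof. exact: sqrtr_ge0. Qed.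

Lemma enormN x : enorm (- x) = enorm x.
Proof. by rewrite /enorm; congr Num.sqrt; apply: eq_bigr => i _; rewrite mxE sqrrN. Qed.

Lemma enorm0 : enorm (0 : 'rV[R]_n) = 0.
Proof. by rewrite /enorm big1 ?sqrtr0 // => i _; rewrite mxE expr0n. Qed.

Lemma enormD a b : enorm (a + b) <= enorm a + enorm b.
Proof.
rewrite -ler_sqr ?nnegrE ?addr_ge0 ?enorm_ge0 //.
rewrite /enorm sqrrD !sqr_sqrtr ?SS_ge0 //.
have -> : \sum_(i < n) (a + b) ord0 i ^+ 2 =
   \sum_(i < n) (1 * a ord0 i + 1 * b ord0 i) ^+ 2.
  by apply: eq_bigr => i _; rewrite mxE !mul1r.
rewrite quadE -/(SS a) -/(SS b) expr1n !mul1r mulr1.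
rewrite -addrA [X in _ <= X]addrAC -addrA lerD2l addrC lerD2l.
rewrite mulr1 mulr_natl lerMn2r /=.
rewrite -sqrtrM ?SS_ge0 //.
apply: le_trans (ler_norm _) _.
by rewrite -sqrtr_sqr ler_sqrt // ?CS // mulr_ge0 ?SS_ge0.
Qed.

Lemma enorm_coord x i : `|x ord0 i| <= enorm x.
Proof.
rewrite -sqrtr_sqr ler_sqrt ?SS_ge0 //.
rewrite /SS (bigD1 i) //= lerDl.
by apply: sumr_ge0 => j _; rewrite sqr_ge0.
Qed.

Lemma coord_mx x i : `|x ord0 i| <= `|x|.
Proof.
have -> : `|x| = mx_norm x by [].
rewrite mx_normrE.
by apply: (le_trans _ (le_bigmax _ _ (ord0, i))).
Qed.

Lemma mx_le_enorm x : `|x| <= enorm x.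
Proof.
have [->|] := eqVneq `|x| 0; first exact: enorm_ge0.
have -> : `|x| = mx_norm x by [].
move=> /mx_norm_neq0 [[i j]] /= ->.
by rewrite (ord1 i) enorm_coord.
Qed.

Lemma enorm_le_mx x : enorm x <= n%:R * `|x|.
Proof.
rewrite -[X in _ <= X]ger0_norm ?mulr_ge0 // -sqrtr_sqr.
rewrite ler_sqrt ?sqr_ge0 //.
apply: (@le_trans _ _ (\sum_(i < n) `|x| ^+ 2)).
  apply: ler_sum => i _; rewrite -real_normK ?num_real //.
  by rewrite ler_sqr ?nnegrE ?coord_mx.
rewrite sumr_const card_ord exprMn.
have -> : `|x| ^+ 2 *+ n = n%:R * `|x| ^+ 2 by rewrite mulr_natl.
rewrite ler_wpM2r ?sqr_ge0 //.
by rewrite -natrX ler_nat; case: (n) => // k; rewrite expnS leq_pmulr.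
Qed.

Lemma small_pow (q b : R) : 0 < q -> 0 < b ->
  exists2 d, 0 < d & forall t, 0 <= t -> t < d -> t `^ q < b.
Proof.
move=> q0 b0; exists (b `^ q^-1); first by rewrite powR_gt0.
move=> t t0 td.
have -> : b = (b `^ q^-1) `^ q by rewrite -powRrM mulVf ?gt_eqF // powRr1 // ltW.
by apply: gt0_ltr_powR => //; rewrite nnegrE // powR_ge0.
Qed.

Lemma powR_lt_inv (q s t : R) : 0 < q -> 0 <= s -> 0 <= t -> s `^ q < t `^ q -> s < t.
Proof.
move=> q0 s0 t0; apply: contraTT; rewrite -!leNgt => ts.
by apply: ge0_ler_powR => //; [exact: ltW| rewrite nnegrE..].
Qed.

Lemma half_convex (p a b : R) : 1 <= p -> 0 <= a -> 0 <= b ->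
  (2^-1 * a + 2^-1 * b) `^ p <= 2^-1 * a `^ p + 2^-1 * b `^ p.
Proof.
move=> p1 a0 b0.
rewrite {2 4}(_ : 2^-1 = 1 - 2^-1); last by rewrite {2}(splitr 1) div1r addrK.
by apply: (convex_powR p1 (Itv01 _ _)) => //=;
  rewrite ?inE/= ?in_itv/= ?andbT // ?invr_ge0// invf_le1 ?ler1n.
Qed.

Lemma pow_convex (a b p : R) : 1 <= p -> 0 <= a -> 0 <= b ->
  2 `^ (1 - p) * (a + b) `^ p <= a `^ p + b `^ p.
Proof.
move=> p1 a0 b0.
have h := @half_convex p a b p1 a0 b0.
have e1 : 2^-1 * a + 2^-1 * b = (a + b) * 2^-1 by ring.
rewrite e1 powRM ?invr_ge0 ?addr_ge0 // in h.
have e2 : 2 `^ (1 - p) = 2 * (2^-1) `^ p.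
  rewrite powRD ?pnatr_eq0 ?implybT // powRr1 // powRN.
  congr (_ * _); apply/esym/(@mulIf _ (2 `^ p)); first by rewrite gt_eqF ?powR_gt0.
  rewrite mulVf ?gt_eqF ?powR_gt0 // -powRM ?invr_ge0 // mulVf ?pnatr_eq0 //.
  by rewrite powR1.
rewrite e2 -(ler_pM2l (_ : 0 < 2^-1)) ?invr_gt0 //.
by rewrite mulrA mulKf ?pnatr_eq0 // mulrDr mulrC.
Qed.


Lemma lt_ninfD (a : \bar R) (b : R) : (-oo < a)%E -> (-oo < a + b%:E)%E.
Proof. by case: a => [r| |] //= _; rewrite ltNye. Qed.

Lemma calm_lb (p M : R) (phi : 'rV[R]_n -> \bar R) :
  (0 < p)%R -> p_calm p M phi (0%R : 'rV[R]_n) -> phi 0 = 0%E ->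
  forall z, ((- (M * enorm z `^ p))%:E <= phi z)%E.
Proof.
move=> p0 [_ calm] phi0 z.
have [->|zn0] := eqVneq z 0.
  by rewrite phi0 enorm0 powR0 ?gt_eqF // mulr0 oppr0.
have := calm z zn0; rewrite phi0 subr0.
case: (phi z) => [r| |] //=; rewrite ?lte_fin ?lee_fin => h.
  by rewrite lerNl; rewrite -subr_ge0 opprK addrC ltW.
by rewrite leey.
Qed.

Lemma F_lsc (phi : 'rV[R]_n -> \bar R) (g : 'rV[R]_n -> R) :
  lower_semicontinuous phi -> (forall z, -oo < phi z)%E ->
  (forall z0 (a : R), a < g z0 -> exists2 V, nbhs z0 V & forall z, V z -> a < g z) ->
  lower_semicontinuous (fun z => phi z + (g z)%:E)%E.
Proof.
move=> lscf fNy gl z0 a ha.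
have [u uphi ug] : exists2 u : R, (u%:E < phi z0)%E & a - u < g z0.
  move: (fNy z0) ha; case: (phi z0) => [r| |] //= _.
    rewrite -EFinD lte_fin => h.
    exists (r - (r + g z0 - a) / 2); rewrite ?lte_fin; lra.
  by move=> _; exists (a - g z0 + 1); rewrite ?ltry //; lra.
have [V1 nV1 hV1] := lscf z0 u uphi.
have [V2 nV2 hV2] := gl z0 _ ug.
exists (V1 `&` V2); first exact: filterI.
move=> z [/hV1 h1 /hV2 h2].
have e : u + (a - u) = a by rewrite addrC subrK.
by rewrite -e EFinD; apply: lteD.
Qed.

Lemma g_lsc (p pg : R) (x : 'rV[R]_n) : 0 < p -> 0 < pg ->
  forall z0 (a : R), a < enorm (x - z0) `^ p / pg ->
  exists2 V, nbhs z0 V & forall z, V z -> a < enorm (x - z) `^ p / pg.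
Proof.
move=> p0 pg0 z0 a ha.
have [a0|a0] := ltP a 0.
  exists setT; first exact: filterT.
  by move=> z _; apply: lt_le_trans a0 _; rewrite divr_ge0 ?powR_ge0 ?ltW.
pose b := (a * pg) `^ p^-1.
have bp : b `^ p = a * pg.
  by rewrite /b -powRrM mulVf ?gt_eqF // powRr1 // mulr_ge0 // ltW.
have b0 : 0 <= b by exact: powR_ge0.
have hb : b < enorm (x - z0).
  apply: (@powR_lt_inv p _ _ p0) => //; first exact: enorm_ge0.
  by rewrite bp -ltr_pdivlMr.
pose e := enorm (x - z0) - b.
have e0 : 0 < e by rewrite subr_gt0.
exists (ball z0 (e / n.+1%:R)); first by apply: nbhsx_ballx; rewrite divr_gt0.
move=> z; rewrite -ball_normE /= distrC => hz.
have hz' : enorm (z - z0) < e.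
  apply: le_lt_trans (enorm_le_mx _) _.
  apply: (@le_lt_trans _ _ (n.+1%:R * `|z - z0|)).
    by rewrite ler_wpM2r ?normr_ge0 // ler_nat.
  by move: hz; rewrite ltr_pdivlMr ?ltr0n // mulrC.
have tri : enorm (x - z0) <= enorm (x - z) + enorm (z - z0).
  have -> : x - z0 = (x - z) + (z - z0) by rewrite addrA subrK.
  exact: enormD.
have hb' : b < enorm (x - z) by rewrite /e in hz'; lra.
rewrite ltr_pdivlMr // -bp; apply: gt0_ltr_powR => //; rewrite nnegrE //.
exact: enorm_ge0.
Qed.

Lemma KI (p M gamma : R) (phi : 'rV[R]_n -> \bar R) : 1 < p -> 0 < gamma ->
  p_calm p M phi (0 : 'rV[R]_n) -> phi 0 = 0%E -> forall x z,
  (((2 `^ (1 - p) / (p * gamma) - M) * enorm z `^ p - enorm x `^ p / (p * gamma))%:E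
    <= phi z + (enorm (x - z) `^ p / (p * gamma))%:E)%E.
Proof.
move=> p1 g0 calm phi0 x z.
have p0 : 0 < p by apply: lt_trans p1.
have pg0 : 0 < p * gamma by rewrite mulr_gt0.
have e : ((2 `^ (1 - p) / (p * gamma) - M) * enorm z `^ p - enorm x `^ p / (p * gamma))
   = (- (M * enorm z `^ p)) + (2 `^ (1 - p) * enorm z `^ p - enorm x `^ p) / (p * gamma).
  by ring.
rewrite e EFinD; apply: leeD; first exact: calm_lb.
rewrite lee_fin ler_pM2r ?invr_gt0 // lerBlDr.
apply: le_trans _ (@pow_convex (enorm (x - z)) (enorm x) p (ltW p1) (enorm_ge0 _) (enorm_ge0 _)).
rewrite ler_wpM2l ?powR_ge0 //; apply: ge0_ler_powR; rewrite ?nnegrE ?addr_ge0 ?enorm_ge0 //; first exact: ltW.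
rewrite -(enormN (x - z)) opprB.
by rewrite -{1}(subrK x z) enormD.
Qed.

End E.

Module LSC.
Import finmap.
Section M.
Variable (R : realType) (T : ptopologicalType).
Local Open Scope ereal_scope.

Lemma seq_min (f : T -> \bar R) (s : seq T) : s != [::] ->
  exists2 z, z \in s & forall w, w \in s -> f z <= f w.
Proof.
elim: s => [//|a s IH] _.
have [->|/IH [z zs zmin]] := eqVneq s [::].
  by exists a => [|w]; rewrite ?mem_seq1 ?inE // => /eqP ->.
have [faz|fza] := leP (f a) (f z).
  exists a; first by rewrite inE eqxx.
  move=> w; rewrite inE => /orP [/eqP -> //|ws].
  exact: le_trans faz (zmin _ ws).
exists z; first by rewrite inE zs orbT.
move=> w; rewrite inE => /orP [/eqP -> |ws]; [exact: ltW | exact: zmin].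
Qed.

Lemma lsc_compact_min (f : T -> \bar R) (K : set T) :
  (forall x, -oo < f x) -> lower_semicontinuous f -> compact K -> K !=set0 ->
  exists2 y, K y & forall z, K z -> f y <= f z.
Proof.
move=> fNy lscf cK [x0 Kx0].
apply: contrapT => nex.
have H : forall y, K y -> exists z, K z /\ f z < f y.
  move=> y Ky; apply: contrapT => hn; apply: nex; exists y => // z Kz.
  rewrite leNgt; apply/negP => lt; apply: hn; by exists z.
move: cK; rewrite compact_cover => /(_ T K (fun z => [set y | f z < f y])).
case.
- move=> z _.
  have := fNy z; case: (f z) => [r _| _ |//].
  + by move/lower_semicontinuousP: lscf; apply.
  + have -> : [set y | +oo < f y] = set0.
      by apply/seteqP; split => y //=; rewrite ltNge leey.
    exact: open0.
- move=> y Ky; have [z [Kz lt]] := H y Ky; by exists z.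
move=> D' D'K cov.
have hne : enum_fset D' != [::].
  have [i Di _] := cov x0 Kx0.
  by apply/eqP => e; move: Di => /=; rewrite -[i \in D']/(i \in enum_fset D') e.
have [w wD wmin] := seq_min f (enum_fset D') hne.
have [v vD lt] := cov w (set_mem (D'K _ wD)).
have := wmin v vD.
by rewrite leNgt lt.
Qed.
End M.
End LSC.

Theorem lemma4 (R : realType) (n : nat) (p M : R)
  (phi : 'rV[R]_n -> \bar R) :
  1 < p -> proper_fun phi -> lower_semicontinuous phi ->
  0 < M -> p_calm p M phi 0 -> phi 0 = 0%E ->
  forall gamma : R, 0 < gamma -> gamma < (2 `^ (1 - p)) / (M * p) ->
  forall eps : R, 0 < eps ->
  exists U : set 'rV[R]_n, nbhs (0 : 'rV[R]_n) U /\
    (forall x, U x -> prox p gamma phi x !=set0) /\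
    (forall x y, U x -> prox p gamma phi x y ->
       enorm y < eps /\ (phi y < eps%:E)%E /\
       (enorm (x - y) `^ (p - 1)) / gamma < eps).
Proof.
move=> p1 [phiNy _] lscf M0 calm phi0 gamma g0 gb eps eps0.
have p0 : 0 < p by apply: lt_trans p1.
have pg0 : 0 < p * gamma by rewrite mulr_gt0.
pose c := 2 `^ (1 - p) / (p * gamma) - M.
have c0 : 0 < c.
  rewrite /c subr_gt0 ltr_pdivlMr //.
  move: gb; rewrite ltr_pdivlMr ?mulr_gt0 //.
  have -> : M * (p * gamma) = gamma * (M * p) by ring.
  done.
pose F x z := (phi z + (enorm (x - z) `^ p / (p * gamma))%:E)%E.
have KIx : forall x z, ((c * enorm z `^ p - enorm x `^ p / (p * gamma))%:E <= F x z)%E.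
  by move=> x z; apply: KI.
pose o : 'rV[R]_n := 0.
have F0 : forall x, F x o = (enorm x `^ p / (p * gamma))%:E.
  by move=> x; rewrite /F /o phi0 subr0 add0e.
have [d1 d10 hd1] := @small_pow R (p - 1) (eps * gamma) (ltac:(by rewrite subr_gt0)) (ltac:(by rewrite mulr_gt0)).
pose eta := Num.min eps (d1 / 4).
have eta0 : 0 < eta by rewrite lt_min eps0 divr_gt0.
have etaeps : eta <= eps by rewrite ge_min lexx.
have etad1 : eta <= d1 / 4 by rewrite ge_min lexx orbT.
have [d2 d20 hd2] := @small_pow R p (Num.min (c * (p * gamma) * eta `^ p / 2) (eps * (p * gamma))) p0
   (ltac:(by rewrite lt_min !mulr_gt0 ?divr_gt0 ?powR_gt0 ?invr_gt0)).
pose kappa := Num.min eta d2.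
have kappa0 : 0 < kappa by rewrite lt_min eta0 d20.
have kapeta : kappa <= eta by rewrite ge_min lexx.
have kapd2 : kappa <= d2 by rewrite ge_min lexx orbT.
have xbound : forall x : 'rV[R]_n, enorm x < kappa ->
    enorm x `^ p < c * (p * gamma) * eta `^ p / 2 /\ enorm x `^ p < eps * (p * gamma).
  move=> x hx.
  have := hd2 (enorm x) (@enorm_ge0 R n x) (lt_le_trans hx kapd2).
  by rewrite lt_min => /andP[].
have C : forall x z : 'rV[R]_n, enorm x < kappa -> (F x z <= F x o)%E -> enorm z < eta.
  move=> x z hx hz.
  have := le_trans (KIx x z) hz; rewrite F0 lee_fin => h.
  have [hx1 _] := xbound x hx.
  apply: (@powR_lt_inv R p _ _ p0); rewrite ?enorm_ge0 ?ltW //.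
  rewrite -(ltr_pM2l c0).
  apply: (@le_lt_trans _ _ (2 * (enorm x `^ p / (p * gamma)))); first by lra.
  rewrite -ltr_pdivlMl // ltr_pdivrMr //; apply: lt_le_trans hx1 _.
  by rewrite le_eqVlt; apply/orP; left; apply/eqP; ring.
pose delta := kappa / n.+1%:R.
have delta0 : 0 < delta by rewrite divr_gt0.
exists (ball 0 delta); split; first exact: nbhsx_ballx.
have Ux : forall x : 'rV[R]_n, ball 0 delta x -> enorm x < kappa.
  move=> x; rewrite -ball_normE /= sub0r normrN => hx.
  apply: le_lt_trans (@enorm_le_mx R n _) _.
  apply: (@le_lt_trans _ _ (n.+1%:R * `|x|)).
    by rewrite ler_wpM2r ?normr_ge0 // ler_nat.
  by move: hx; rewrite ltr_pdivlMr ?ltr0n // mulrC.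
split.
  move=> x /Ux hx.
  pose K := [set z : 'rV[R]_n | `|z| <= eta].
  have K0 : K 0 by rewrite /K /= normr0 ltW.
  have cK : compact K.
    apply: bounded_closed_compact.
      exists eta; split; first exact: num_real.
      by move=> M' hM' y Ky /=; apply: le_trans Ky (ltW hM').
    have -> : K = closed_ball_ Num.Def.normr 0 eta.
      by apply/seteqP; split => z; rewrite /K /closed_ball_ /= sub0r normrN.
    exact: closed_closed_ball_.
  have [y0 Ky0 ymin] := @LSC.lsc_compact_min R _ (F x) K
    (fun z => @lt_ninfD R _ _ (phiNy z))
    (@F_lsc R n phi _ lscf phiNy (@g_lsc R n p (p * gamma) x p0 pg0)) cK (ex_intro _ 0 K0).
  exists y0 => z.
  have [Kz|nKz] := pselect (K z); first exact: ymin.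
  rewrite leNgt; apply/negP => lt.
  have hz : (F x z <= F x o)%E by apply: le_trans (ltW lt) (ymin o K0).
  have := C x z hx hz.
  have : eta < enorm z.
    apply: lt_le_trans (@mx_le_enorm R n z); rewrite ltNge; apply/negP => h; exact: nKz.
  by move=> a b; move: (lt_trans a b); rewrite ltxx.
move=> x y /Ux hx hy.
have hy0 : (F x y <= F x o)%E := hy o.
have ey := C x y hx hy0.
have [_ hx2] := xbound x hx.
split; first exact: lt_le_trans ey etaeps.
split.
  apply: (@le_lt_trans _ _ (F x y)).
    by rewrite /F leeDl // lee_fin divr_ge0 ?powR_ge0 ?ltW.
  apply: le_lt_trans hy0 _; rewrite F0 lte_fin ltr_pdivrMr //.
rewrite ltr_pdivrMr //; apply: hd1; first exact: (@enorm_ge0 R n).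
apply: (@le_lt_trans _ _ (enorm x + enorm y)).
  by rewrite -(@enormN R n y) enormD.
have := @enorm_ge0 R n x; have := @enorm_ge0 R n y; lra.
Qed.
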